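(* Let $d$ be a positive integer, $b\geqslant 5$ an integer, $a>0$ a real number with $\zeta=\log_b a\notin\mathbb{Q}$. Let $\mathbf{w}=(\mathbf{w}_n)_{n\geqslant1}$ where $\mathbf{w}_n$ is the most significant digit of $a^{n^d}$ in base $b$. Define $f:\mathbb{T}^d\to\mathbb{T}^d$ by $f(x)_i=\{\zeta+\sum_{j=1}^{i}\binom{i}{j}x_j\}$ for $i=1,\dots,d$, and for $t\in\{1,\dots,b-1\}$ let $U_t=\{x\in\mathbb{T}^d:\log_b t\leqslant x_d<\log_b(t+1)\}$. For a finite word $\mathbf{u}=u_1\cdots u_n$ over $\{1,\dots,b-1\}$ set $U_{\mathbf{u}}=U_{u_1}\cap f^{-1}(U_{u_2})\cap\cdots\cap f^{-(n-1)}(U_{u_n})$. Then $\mathbf{u}$ is a factor of $\mathbf{w}$ if and only if $U_{\mathbf{u}}$ has non-empty interior in $\mathbb{T}^d$.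
   Context: $\mathbb{T}^d=\mathbb{R}^d/\mathbb{Z}^d$ identified with $[0,1)^d$, $\{y\}$ is the fractional part. The most significant digit of a nonzero real $x$ in base $b$ is the unique $j\in\{1,\dots,b-1\}$ with $b^m j\leqslant|x|<b^m(j+1)$ for some integer $m$. A finite word $\mathbf{u}$ of length $n$ is a factor of $\mathbf{w}$ if $\mathbf{u}=\mathbf{w}_k\mathbf{w}_{k+1}\cdots\mathbf{w}_{k+n-1}$ for some $k\geqslant1$. (With $v_k=(\{\zeta k\},\dots,\{\zeta k^d\})$ one has $v_{k+1}=f(v_k)$ and $\mathbf{w}_k=t$ iff $v_k\in U_t$.) *)

(* Defs.v *)
From Stdlib Require Import Reals Lra Lia List.
Open Scope R_scope.

Definition frac (y : R) : R := frac_part y.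

Definition logb (b : nat) (x : R) : R := ln x / ln (INR b).

Definition is_msd (b : nat) (x : R) (j : nat) : Prop :=
  (1 <= j <= b - 1)%nat /\
  exists m : Z, powerRZ (INR b) m * INR j <= Rabs x < powerRZ (INR b) m * INR (j + 1).

Definition word_w (b d : nat) (a : R) (n : nat) (t : nat) : Prop :=
  is_msd b (a ^ (n ^ d)) t.

Definition is_factor (b d : nat) (a : R) (u : list nat) : Prop :=
  exists k : nat, (1 <= k)%nat /\
    forall i : nat, (i < length u)%nat -> word_w b d a (k + i) (nth i u 0%nat).

(* Points of T^d are functions nat -> R, only coordinates 1..d matter;
   x is in T^d = [0,1)^d iff 0 <= x_i < 1 for 1 <= i <= d. *)
Definition in_torus (d : nat) (x : nat -> R) : Prop :=
  forall i : nat, (1 <= i <= d)%nat -> 0 <= x i < 1.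

Definition in_range (d i : nat) : bool := Nat.leb 1 i && Nat.leb i d.

Definition fmap (d : nat) (zeta : R) (x : nat -> R) : nat -> R :=
  fun i => if in_range d i
           then frac (zeta + sum_f 1 i (fun j => Binomial.C i j * x j))
           else 0.

Definition U_t (b d : nat) (t : nat) (x : nat -> R) : Prop :=
  in_torus d x /\ logb b (INR t) <= x d < logb b (INR (t + 1)).

Definition U_word (b d : nat) (zeta : R) (u : list nat) (x : nat -> R) : Prop :=
  in_torus d x /\
  forall i : nat, (i < length u)%nat ->
    U_t b d (nth i u 0%nat) (Nat.iter i (fmap d zeta) x).

Definition proj_torus (d : nat) (y : nat -> R) : nat -> R :=
  fun i => if in_range d i then frac (y i) else 0.

(* A subset S of T^d has non-empty interior (quotient topology of R^d/Z^d):
   some open ball of R^d projects into S. *)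
Definition nonempty_interior (d : nat) (S : (nat -> R) -> Prop) : Prop :=
  exists (c : nat -> R) (eps : R), 0 < eps /\
    forall y : nat -> R,
      (forall i, (1 <= i <= d)%nat -> Rabs (y i - c i) < eps) ->
      S (proj_torus d y).

(* Main.v *)
Require Import Defs.
From Stdlib Require Import Reals List.
From Stdlib Require Import Lra Lia ZArith Classical FunctionalExtensionality IndefiniteDescription.
Open Scope R_scope.

Fixpoint sumN (N : nat) (f : nat -> R) : R :=
  match N with O => 0 | S N' => sumN N' f + f N' end.

Lemma Rabs_le_between a b : Rabs a <= b -> - b <= a <= b.
Proof. unfold Rabs; destruct (Rcase_abs a); lra. Qed.

Lemma Rabs_lt_between a b : Rabs a < b -> - b < a < b.
Proof. unfold Rabs; destruct (Rcase_abs a); lra. Qed.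

Lemma Rabs_lt' a b : - b < a < b -> Rabs a < b.
Proof. unfold Rabs; destruct (Rcase_abs a); lra. Qed.

Lemma sumN_S N f : sumN (S N) f = sumN N f + f N.
Proof. reflexivity. Qed.

Lemma sumN_ext N f g : (forall n, (n < N)%nat -> f n = g n) -> sumN N f = sumN N g.
Proof. induction N; simpl; intros H; auto. rewrite IHN by (intros; apply H; lia). rewrite H by lia; auto. Qed.

Lemma sumN_plus N f g : sumN N (fun n => f n + g n) = sumN N f + sumN N g.
Proof. induction N; simpl; [lra|rewrite IHN; lra]. Qed.

Lemma sumN_scal N c f : sumN N (fun n => c * f n) = c * sumN N f.
Proof. induction N; simpl; [lra|rewrite IHN; lra]. Qed.

Lemma sumN_const N c : sumN N (fun _ => c) = INR N * c.
Proof. induction N; simpl sumN; [simpl; lra| rewrite IHN, S_INR; lra]. Qed.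

Lemma sumN_le N f g : (forall n, (n < N)%nat -> f n <= g n) -> sumN N f <= sumN N g.
Proof. induction N; simpl; intros H; [lra|]. assert (f N <= g N) by (apply H; lia).
 assert (sumN N f <= sumN N g) by (apply IHN; intros; apply H; lia). lra. Qed.

Lemma sumN_abs N f : Rabs (sumN N f) <= sumN N (fun n => Rabs (f n)).
Proof. induction N; simpl. rewrite Rabs_R0; lra.
 eapply Rle_trans; [apply Rabs_triang|lra]. Qed.

Lemma sumN_swap N M (g : nat -> nat -> R) :
  sumN N (fun n => sumN M (fun m => g n m)) = sumN M (fun m => sumN N (fun n => g n m)).
Proof. induction N; simpl.
 - induction M; simpl; lra.
 - rewrite IHN. rewrite <- sumN_plus. reflexivity. Qed.

Lemma sumN_sq N f : (sumN N f)^2 = sumN N (fun r => sumN N (fun s => f r * f s)).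
Proof. transitivity (sumN N (fun r => f r * sumN N f)).
 - rewrite (sumN_ext N (fun r => f r * sumN N f) (fun r => sumN N f * f r)) by (intros; ring).
   rewrite sumN_scal. ring.
 - apply sumN_ext; intros. rewrite <- sumN_scal. reflexivity. Qed.

Lemma sumN_nonneg N f : (forall n, (n < N)%nat -> 0 <= f n) -> 0 <= sumN N f.
Proof. intros H. rewrite <- (Rmult_0_r (INR N)), <- sumN_const. apply sumN_le. auto. Qed.

Lemma cauchy_schwarz N f : (sumN N f)^2 <= INR N * sumN N (fun n => f n ^ 2).
Proof. induction N. { simpl; right; ring. } rewrite !sumN_S.
 rewrite S_INR. set (Sm := sumN N f) in *. set (Q := sumN N (fun n => f n ^ 2)) in *.
 assert (HQ : 0 <= Q). { unfold Q. apply sumN_nonneg. intros; apply pow2_ge_0. }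
 assert (HN : 0 <= INR N) by apply pos_INR.
 destruct (Req_dec (INR N) 0) as [E|E].
 - rewrite E in *. assert (Sm = 0) by nra. rewrite H. nra.
 - assert (2 * Sm * f N * INR N <= INR N * INR N * f N ^2 + INR N * Q) by (pose proof (pow2_ge_0 (INR N * f N - Sm)); nra).
   assert (2 * Sm * f N <= INR N * f N ^ 2 + Q).
   { apply Rmult_le_reg_r with (INR N). lra. nra. }
   nra. Qed.

Lemma sumN_shift_diff N r f : (forall n, Rabs (f n) <= 1) ->
  Rabs (sumN N (fun n => f (n + r)%nat) - sumN N f) <= 2 * INR r.
Proof. intros Hf. induction r.
 - simpl. rewrite (sumN_ext N _ f) by (intros; f_equal; lia). rewrite Rminus_diag, Rabs_R0; lra.
 - rewrite S_INR.
   assert (E : sumN N (fun n => f (n + S r)%nat) = sumN N (fun n => f (n + r)%nat) + f (N + r)%nat - f r).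
   { clear IHr. induction N; simpl. replace (0 + r)%nat with r by lia. lra.
     rewrite IHN. replace (N + S r)%nat with (S (N + r))%nat by lia. lra. }
   rewrite E. pose proof (Hf (N+r)%nat). pose proof (Hf r).
   apply Rabs_le_between in H; apply Rabs_le_between in H0.
   apply Rabs_le. apply Rabs_le_between in IHr. lra. Qed.

Fixpoint PolyD (D : nat) (al : R) (P : nat -> R) : Prop :=
  match D with
  | O => forall n, P n = al
  | S D' => forall h, (1 <= h)%nat -> PolyD D' (INR (S D') * INR h * al) (fun n => P (n + h)%nat - P n)
  end.

Lemma PolyD_ext D : forall al al' P Q, PolyD D al P -> al = al' -> (forall n, P n = Q n) -> PolyD D al' Q.
Proof. induction D; simpl; intros al al' P Q H E HPQ.
 - intros n; rewrite <- HPQ, <- E; auto.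
 - intros h Hh. apply (IHD _ _ _ _ (H h Hh)). subst; auto. intros; rewrite !HPQ; auto. Qed.

Lemma PolyD_shift D : forall al P s, PolyD D al P -> PolyD D al (fun n => P (n + s)%nat).
Proof. induction D; simpl; intros al P s H.
 - intros; auto.
 - intros h Hh. apply (PolyD_ext D _ _ _ _ (IHD _ _ s (H h Hh))); auto.
   intros; simpl. f_equal. f_equal. lia. Qed.

Lemma PolyD_plus D : forall a b P Q, PolyD D a P -> PolyD D b Q -> PolyD D (a + b) (fun n => P n + Q n).
Proof. induction D; simpl; intros a b P Q HP HQ.
 - intros; rewrite HP, HQ; auto.
 - intros h Hh. apply (PolyD_ext D _ _ _ _ (IHD _ _ _ _ (HP h Hh) (HQ h Hh))). ring. intros; ring. Qed.

Lemma PolyD_scal D : forall a c P, PolyD D a P -> PolyD D (c * a) (fun n => c * P n).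
Proof. induction D; simpl; intros a c P HP.
 - intros; rewrite HP; auto.
 - intros h Hh. apply (PolyD_ext D _ _ _ _ (IHD _ c _ (HP h Hh))). ring. intros; ring. Qed.

Lemma PolyD_lift D : forall a P, PolyD D a P -> PolyD (S D) 0 P.
Proof. induction D; intros a P HP.
 - intros h Hh n. simpl in *. rewrite !HP. ring.
 - intros h Hh. apply (PolyD_ext (S D) _ _ _ _ (IHD _ _ (HP h Hh))). ring. auto. Qed.

Lemma PolyD_const D c : PolyD (S D) 0 (fun _ => c).
Proof. induction D.
 - apply (PolyD_lift 0 c). simpl; auto.
 - apply (PolyD_lift (S D) 0). auto. Qed.

Lemma PolyD_lift_le D D' : forall a P, (D < D')%nat -> PolyD D a P -> PolyD D' 0 P.
Proof. induction D'; intros a P Hlt HP. lia.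
 destruct (Nat.eq_dec D D'). subst. eapply PolyD_lift; eauto.
 apply (PolyD_lift D' 0). apply (IHD' a); auto. lia. Qed.

Lemma PolyD_mulid D : forall a P, PolyD D a P -> PolyD (S D) a (fun n => INR n * P n).
Proof. induction D; intros a P HP.
 - simpl in *. intros h Hh n. rewrite !HP, plus_INR. ring.
 - intros h Hh.
   assert (H1 := IHD _ _ (HP h Hh)).
   assert (H2 := PolyD_scal (S D) a (INR h) _ (PolyD_shift (S D) a P h HP)).
   apply (PolyD_ext (S D) _ _ _ _ (PolyD_plus _ _ _ _ _ H1 H2)).
   rewrite !S_INR. ring. intros n. rewrite plus_INR. ring. Qed.

Lemma PolyD_pow i : PolyD i 1 (fun n => INR n ^ i).
Proof. induction i.
 - simpl; auto.
 - apply (PolyD_ext (S i) _ _ _ _ (PolyD_mulid i _ _ IHi)); [auto| intros; simpl; ring]. Qed.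

Definition Irr (al : R) : Prop := ~ exists p q : Z, q <> 0%Z /\ al = IZR p / IZR q.

Lemma Irr_mulZ al k : Irr al -> k <> 0%Z -> Irr (IZR k * al).
Proof. intros H Hk [p [q [Hq E]]]. apply H. exists p, (q * k)%Z. split. lia.
 rewrite mult_IZR. apply not_0_IZR in Hq. apply not_0_IZR in Hk.
 apply (Rmult_eq_reg_l (IZR k)); auto. rewrite E. field. auto. Qed.

Lemma Irr_mulN al k : Irr al -> (k <> 0)%nat -> Irr (INR k * al).
Proof. intros. rewrite INR_IZR_INZ. apply Irr_mulZ; auto. lia. Qed.

Lemma Irr_opp al : Irr al -> Irr (- al).
Proof. intros H. replace (-al) with (IZR (-1) * al) by (simpl; ring). apply Irr_mulZ; auto. lia. Qed.

Definition WS (P : nat -> R) : Prop :=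
  forall eps, 0 < eps -> exists N0, forall N, (N0 <= N)%nat ->
    Rabs (sumN N (fun n => cos (2 * PI * P n))) <= eps * INR N /\
    Rabs (sumN N (fun n => sin (2 * PI * P n))) <= eps * INR N.

Lemma telescope N g : sumN N (fun n => g (S n) - g n) = g N - g O.
Proof. induction N; simpl; [lra| rewrite IHN; lra]. Qed.

Lemma geo_bounds al be N : sin (PI * al) <> 0 ->
  Rabs (sumN N (fun n => cos (2 * PI * (be + INR n * al)))) <= 1 / Rabs (sin (PI * al)) /\
  Rabs (sumN N (fun n => sin (2 * PI * (be + INR n * al)))) <= 1 / Rabs (sin (PI * al)).
Proof. intros Hs. set (s := sin (PI * al)).
 assert (Ha : 0 < Rabs s) by (apply Rabs_pos_lt; auto).
 set (g := fun n => sin (2 * PI * (be + INR n * al)) - 0 - PI * al).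
 assert (E1 : 2 * s * sumN N (fun n => cos (2 * PI * (be + INR n * al))) =
   sin (2 * PI * (be + INR N * al) - PI * al) - sin (2 * PI * (be + INR 0 * al) - PI * al)).
 { rewrite <- (telescope N (fun n => sin (2 * PI * (be + INR n * al) - PI * al))).
   rewrite <- sumN_scal. apply sumN_ext; intros n _.
   replace (2 * PI * (be + INR (S n) * al) - PI * al) with (2 * PI * (be + INR n * al) + PI * al)
     by (rewrite S_INR; ring).
   rewrite sin_plus, sin_minus. unfold s. ring. }
 assert (E2 : 2 * s * sumN N (fun n => sin (2 * PI * (be + INR n * al))) =
   cos (2 * PI * (be + INR 0 * al) - PI * al) - cos (2 * PI * (be + INR N * al) - PI * al)).
 { replace (cos (2 * PI * (be + INR 0 * al) - PI * al) - cos (2 * PI * (be + INR N * al) - PI * al))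
     with ((fun n => - cos (2 * PI * (be + INR n * al) - PI * al)) N - (fun n => - cos (2 * PI * (be + INR n * al) - PI * al)) O) by ring.
   rewrite <- (telescope N (fun n => - cos (2 * PI * (be + INR n * al) - PI * al))).
   rewrite <- sumN_scal. apply sumN_ext; intros n _.
   replace (2 * PI * (be + INR (S n) * al) - PI * al) with (2 * PI * (be + INR n * al) + PI * al)
     by (rewrite S_INR; ring).
   rewrite cos_plus, cos_minus. unfold s. ring. }
 split.
 - apply (Rmult_le_reg_l (2 * Rabs s)). lra.
   replace (2 * Rabs s * (1 / Rabs s)) with 2 by (field; lra).
   replace (2 * Rabs s) with (Rabs (2 * s)) by (rewrite Rabs_mult, Rabs_right; lra).
   rewrite <- Rabs_mult, E1. eapply Rle_trans. apply Rabs_triang. rewrite Rabs_Ropp.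
   pose proof (Rabs_le_between _ _ (Rabs_le _ _ (SIN_bound (2 * PI * (be + INR N * al) - PI * al)))).
   pose proof (SIN_bound (2 * PI * (be + INR N * al) - PI * al)).
   pose proof (SIN_bound (2 * PI * (be + INR 0 * al) - PI * al)).
   assert (forall x, -1 <= x <= 1 -> Rabs x <= 1) by (intros; apply Rabs_le; lra).
   pose proof (H2 _ H0). pose proof (H2 _ H1). lra.
 - apply (Rmult_le_reg_l (2 * Rabs s)). lra.
   replace (2 * Rabs s * (1 / Rabs s)) with 2 by (field; lra).
   replace (2 * Rabs s) with (Rabs (2 * s)) by (rewrite Rabs_mult, Rabs_right; lra).
   rewrite <- Rabs_mult, E2. eapply Rle_trans. apply Rabs_triang. rewrite Rabs_Ropp.
   pose proof (COS_bound (2 * PI * (be + INR N * al) - PI * al)).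
   pose proof (COS_bound (2 * PI * (be + INR 0 * al) - PI * al)).
   assert (forall x, -1 <= x <= 1 -> Rabs x <= 1) by (intros; apply Rabs_le; lra).
   pose proof (H1 _ H). pose proof (H1 _ H0). lra.
Qed.

Lemma Irr_sin al : Irr al -> sin (PI * al) <> 0.
Proof. intros H E. apply sin_eq_0_0 in E. destruct E as [k Hk]. apply H.
 exists k, 1%Z. split. lia. replace (IZR 1) with 1 by reflexivity.
 assert (PI <> 0) by (pose proof PI_RGT_0; lra).
 apply (Rmult_eq_reg_l PI); auto. rewrite Hk. field. Qed.

Lemma archi_N (K eps : R) : 0 < eps -> exists N0 : nat, forall N, (N0 <= N)%nat -> K <= eps * INR N.
Proof. intros He. destruct (INR_archimed eps K He) as [n Hn]. exists n. intros N HN.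
 apply le_INR in HN. nra. Qed.

Lemma weyl_base al P : Irr al -> PolyD 1 al P -> WS P.
Proof. intros Hi HP.
 assert (E : forall n, P n = P O + INR n * al).
 { intros [|n]. simpl; ring. specialize (HP (S n) ltac:(lia) O).
   cbv beta in HP. replace (O + S n)%nat with (S n) in HP by lia. replace (INR 1) with 1 in HP by reflexivity. lra. }
 intros eps He. pose proof (Irr_sin _ Hi) as Hs.
 destruct (archi_N (1 / Rabs (sin (PI * al))) eps He) as [N0 HN0]. exists N0. intros N HN.
 destruct (geo_bounds al (P O) N Hs) as [H1 H2].
 rewrite (sumN_ext N _ (fun n => cos (2 * PI * (P O + INR n * al)))) by (intros; rewrite E; auto).
 rewrite (sumN_ext N (fun n => sin _) (fun n => sin (2 * PI * (P O + INR n * al)))) by (intros; rewrite E; auto).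
 specialize (HN0 N HN). lra. Qed.

Lemma COS_bound_abs x : Rabs (cos x) <= 1.
Proof. apply Rabs_le. pose proof (COS_bound x). lra. Qed.
Lemma SIN_bound_abs x : Rabs (sin x) <= 1.
Proof. apply Rabs_le. pose proof (SIN_bound x). lra. Qed.

Lemma sumN_minus N f g : sumN N (fun n => f n - g n) = sumN N f - sumN N g.
Proof. induction N; simpl; [lra|rewrite IHN; lra]. Qed.

Lemma sumN_bound H g K : (forall r, (r < H)%nat -> Rabs (g r) <= K) -> Rabs (sumN H g) <= INR H * K.
Proof. intros Hg. eapply Rle_trans. apply sumN_abs. rewrite <- sumN_const. apply sumN_le. auto. Qed.

Lemma sum_indicator H r x : (r < H)%nat -> sumN H (fun s => if Nat.eqb r s then x else 0) = x.
Proof. induction H as [|H IH]; intros Hr. lia. rewrite sumN_S. destruct (Nat.eq_dec r H).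
 - subst. rewrite Nat.eqb_refl. rewrite (sumN_ext H _ (fun _ => 0)). rewrite sumN_const. ring.
   intros n Hn. destruct (Nat.eqb_spec H n); auto. lia.
 - destruct (Nat.eqb_spec r H). lia. rewrite IH; [ring|lia]. Qed.

Lemma shift_part P H N (f : R -> R) : (forall x, Rabs (f x) <= 1) ->
  Rabs (sumN N (fun n => sumN H (fun r => f (2 * PI * P (n + r)%nat))) - INR H * sumN N (fun n => f (2 * PI * P n)))
  <= 2 * INR H ^ 2.
Proof. intros Hf. rewrite sumN_swap. rewrite <- sumN_const.
 replace (sumN H (fun m => sumN N (fun n => f (2 * PI * P (n + m)%nat))) - sumN H (fun _ => sumN N (fun n => f (2 * PI * P n))))
  with (sumN H (fun m => sumN N (fun n => f (2 * PI * P (n + m)%nat)) - sumN N (fun n => f (2 * PI * P n)))).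
 2: { rewrite sumN_minus. reflexivity. }
 replace (2 * INR H ^ 2) with (INR H * (2 * INR H)) by ring.
 apply sumN_bound. intros r Hr.
 eapply Rle_trans. apply (sumN_shift_diff N r (fun n => f (2 * PI * P n))). auto.
 apply lt_INR in Hr. lra. Qed.

Lemma W_sq P H n :
  (sumN H (fun r => cos (2 * PI * P (n + r)%nat)))^2 + (sumN H (fun r => sin (2 * PI * P (n + r)%nat)))^2
  = sumN H (fun r => sumN H (fun s => cos (2 * PI * (P (n + r)%nat - P (n + s)%nat)))).
Proof. rewrite !sumN_sq. rewrite <- sumN_plus. apply sumN_ext; intros r _.
 rewrite <- sumN_plus. apply sumN_ext; intros s _.
 rewrite Rmult_minus_distr_l, cos_minus. ring. Qed.

Lemma sq_split a b e : Rabs (a - b) <= e -> a ^ 2 <= 2 * b ^ 2 + 2 * e ^ 2.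
Proof. intros Hab. apply Rabs_le_between in Hab.
 assert ((a - b)^2 <= e^2) by nra. pose proof (pow2_ge_0 (b - (a - b))). nra. Qed.

Lemma vdc P H N B : (1 <= H)%nat -> 0 <= B ->
 (forall r s, (r < H)%nat -> (s < H)%nat -> r <> s ->
    Rabs (sumN N (fun n => cos (2 * PI * (P (n + r)%nat - P (n + s)%nat)))) <= B) ->
 INR H ^ 2 * ((sumN N (fun n => cos (2 * PI * P n)))^2 + (sumN N (fun n => sin (2 * PI * P n)))^2)
   <= 2 * INR N * (INR H * (INR N + INR H * B)) + 16 * INR H ^ 4.
Proof. intros HH HB Hrs.
 set (X := sumN N (fun n => sumN H (fun r => cos (2 * PI * P (n + r)%nat)))).
 set (Y := sumN N (fun n => sumN H (fun r => sin (2 * PI * P (n + r)%nat)))).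
 assert (H1 := shift_part P H N cos COS_bound_abs).
 assert (H2 := shift_part P H N sin SIN_bound_abs).
 rewrite Rabs_minus_sym in H1, H2. apply sq_split in H1. apply sq_split in H2. fold X in H1. fold Y in H2.
 assert (CX := cauchy_schwarz N (fun n => sumN H (fun r => cos (2 * PI * P (n + r)%nat)))).
 assert (CY := cauchy_schwarz N (fun n => sumN H (fun r => sin (2 * PI * P (n + r)%nat)))).
 fold X in CX. fold Y in CY.
 assert (E : sumN N (fun n => (sumN H (fun r => cos (2 * PI * P (n + r)%nat)))^2) +
             sumN N (fun n => (sumN H (fun r => sin (2 * PI * P (n + r)%nat)))^2)
           = sumN H (fun r => sumN H (fun s => sumN N (fun n => cos (2 * PI * (P (n + r)%nat - P (n + s)%nat)))))).
 { rewrite <- sumN_plus. rewrite (sumN_ext N _ _ (fun n _ => W_sq P H n)).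
   rewrite sumN_swap. apply sumN_ext; intros. apply sumN_swap. }
 assert (T : sumN H (fun r => sumN H (fun s => sumN N (fun n => cos (2 * PI * (P (n + r)%nat - P (n + s)%nat)))))
    <= INR H * (INR N + INR H * B)).
 { rewrite <- sumN_const. apply sumN_le. intros r Hr.
   rewrite <- (sum_indicator H r (INR N)) by auto. rewrite <- sumN_const, <- sumN_plus.
   apply sumN_le. intros s Hs. destruct (Nat.eqb_spec r s).
   - subst. rewrite (sumN_ext N _ (fun _ => 1)). rewrite sumN_const. lra.
     intros; rewrite Rminus_diag, Rmult_0_r, cos_0; auto.
   - pose proof (Hrs r s Hr Hs n). apply Rabs_le_between in H0. lra. }
 assert (HN : 0 <= INR N) by apply pos_INR.
 replace (INR H ^ 2 * ((sumN N (fun n => cos (2 * PI * P n)))^2 + (sumN N (fun n => sin (2 * PI * P n)))^2))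
  with ((INR H * sumN N (fun n => cos (2 * PI * P n)))^2 + (INR H * sumN N (fun n => sin (2 * PI * P n)))^2) by ring.
 assert (INR N * (sumN N (fun n => (sumN H (fun r => cos (2 * PI * P (n + r)%nat)))^2) +
             sumN N (fun n => (sumN H (fun r => sin (2 * PI * P (n + r)%nat)))^2)) <= INR N * (INR H * (INR N + INR H * B))).
 { apply Rmult_le_compat_l; auto. rewrite E. auto. }
 cbv beta in CX, CY. lra. Qed.

Lemma finite_uniform K (Q : nat -> nat -> Prop) :
  (forall i, (i < K)%nat -> exists N0, forall N, (N0 <= N)%nat -> Q i N) ->
  exists N0, forall i, (i < K)%nat -> forall N, (N0 <= N)%nat -> Q i N.
Proof. induction K; intros HQ. exists O; intros; lia.
 destruct IHK as [N1 H1]. intros; apply HQ; lia.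
 destruct (HQ K ltac:(lia)) as [N2 H2]. exists (max N1 N2). intros i Hi N HN.
 destruct (Nat.eq_dec i K). subst; apply H2; lia. apply H1; lia. Qed.

Lemma sumN_opp N f : sumN N (fun n => - f n) = - sumN N f.
Proof. induction N; simpl; [lra|rewrite IHN; lra]. Qed.

Lemma WS_opp P : WS P -> WS (fun n => - P n).
Proof. intros HP eps He. destruct (HP eps He) as [N0 H0]. exists N0. intros N HN.
 destruct (H0 N HN) as [A1 A2]. split.
 - rewrite (sumN_ext N _ (fun n => cos (2 * PI * P n))); auto. intros; rewrite <- cos_neg; f_equal; ring.
 - rewrite (sumN_ext N _ (fun n => - sin (2 * PI * P n))).
   rewrite sumN_opp, Rabs_Ropp. lra.
   intros; rewrite <- sin_neg; f_equal; ring. Qed.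

Lemma sq_abs_le x y : x ^ 2 <= y ^ 2 -> 0 <= y -> Rabs x <= y.
Proof. intros H Hy. unfold Rabs; destruct (Rcase_abs x); nra. Qed.

Theorem weyl D : forall al P, Irr al -> PolyD (S D) al P -> WS P.
Proof. induction D; intros al P Hi HP. apply (weyl_base al); auto.
 assert (Hd : forall r s, (s < r)%nat -> WS (fun n => P (n + r)%nat - P (n + s)%nat)).
 { intros r s Hrs. assert (HQ := HP (r - s)%nat ltac:(lia)).
   apply (PolyD_shift _ _ _ s) in HQ.
   eapply (IHD _ _ _ (PolyD_ext _ _ _ _ _ HQ eq_refl _)). Unshelve.
   - rewrite Rmult_assoc. apply Irr_mulN. apply Irr_mulN. auto. lia. lia.
   - intros n; cbv beta. f_equal; f_equal; lia. }
 assert (Hrs : forall r s, r <> s -> WS (fun n => P (n + r)%nat - P (n + s)%nat)).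
 { intros r s Hne. destruct (Nat.lt_ge_cases s r). auto.
   assert (W := WS_opp _ (Hd s r ltac:(lia))). intros e He. destruct (W e He) as [N0 HN0].
   exists N0. intros N HN. destruct (HN0 N HN) as [A1 A2].
   rewrite (sumN_ext N _ (fun n => cos (2 * PI * - (P (n + s)%nat - P (n + r)%nat)))).
   rewrite (sumN_ext N (fun n => sin _) (fun n => sin (2 * PI * - (P (n + s)%nat - P (n + r)%nat)))).
   split; auto. intros; f_equal; ring. intros; f_equal; ring. }
 intros dl Hdl.
 set (ep := dl ^ 2 / 6).
 assert (Hep : 0 < ep) by (unfold ep; nra).
 destruct (archi_N 6 (dl ^ 2) ltac:(nra)) as [H0 HH0].
 set (H := S H0).
 assert (HH : 6 <= dl ^ 2 * INR H) by (apply HH0; unfold H; lia).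
 assert (HU := finite_uniform H (fun r N => forall s, (s < H)%nat -> r <> s ->
     Rabs (sumN N (fun n => cos (2 * PI * (P (n + r)%nat - P (n + s)%nat)))) <= ep * INR N)).
 destruct HU as [N1 HN1].
 { intros r Hr. destruct (finite_uniform H (fun s N => r <> s ->
     Rabs (sumN N (fun n => cos (2 * PI * (P (n + r)%nat - P (n + s)%nat)))) <= ep * INR N)) as [N3 HN3].
   2: { exists N3. intros N HN s Hs Hne. apply HN3; auto. }
   intros s Hs. destruct (Nat.eq_dec r s). exists O; intros; contradiction.
   destruct (Hrs r s n ep Hep) as [N2 HN2]. exists N2. intros N HN _. apply HN2; auto. }
 destruct (archi_N (16 * INR H ^ 2) (dl ^ 2 / 3) ltac:(nra)) as [N2 HN2].
 exists (max 1 (max N1 N2)). intros N HN.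
 assert (HNpos : 1 <= INR N) by (replace 1 with (INR 1) by reflexivity; apply le_INR; lia).
 assert (Hv := vdc P H N (ep * INR N) ltac:(unfold H; lia) ltac:(nra)
    (fun r s Hr Hs Hne => HN1 r Hr N ltac:(lia) s Hs Hne)).
 assert (HHpos : 1 <= INR H) by (replace 1 with (INR 1) by reflexivity; apply le_INR; unfold H; lia).
 specialize (HN2 N ltac:(lia)).
 set (Sc := sumN N (fun n => cos (2 * PI * P n))) in *.
 set (Ss := sumN N (fun n => sin (2 * PI * P n))) in *.
 set (h := INR H) in *. set (nn := INR N) in *.
 assert (K1 : 2 * nn * (h * (nn + h * (ep * nn))) + 16 * h ^ 4 <= h ^ 2 * (dl ^ 2 * nn ^ 2)).
 { unfold ep.
   assert (2 * nn * h * nn <= h ^ 2 * dl ^ 2 * nn ^ 2 / 3).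
   { assert (0 <= nn * nn * h) by nra. nra. }
   assert (16 * h ^ 4 <= h ^ 2 * dl ^ 2 * nn ^ 2 / 3).
   { assert (16 * h ^ 2 <= dl ^ 2 / 3 * nn * nn) by nra. nra. }
   nra. }
 assert (K2 : Sc ^ 2 + Ss ^ 2 <= (dl * nn) ^ 2).
 { apply (Rmult_le_reg_l (h ^ 2)). nra. nra. }
 split; apply sq_abs_le; nra. Qed.

Definition dot (d : nat) (k : nat -> Z) (y : nat -> R) : R := sumN d (fun i => IZR (k (S i)) * y (S i)).

Definition evalT (d : nat) (T : list (R * (nat -> Z))) (y : nat -> R) : R :=
  fold_right (fun t acc => fst t * cos (2 * PI * dot d (snd t) y) + acc) 0 T.

Fixpoint zb (d : nat) (k : nat -> Z) : bool :=
  match d with O => true | S d' => Z.eqb (k (S d')) 0 && zb d' k end.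

Definition LT (d : nat) (T : list (R * (nat -> Z))) : R :=
  fold_right (fun t acc => (if zb d (snd t) then fst t else 0) + acc) 0 T.

Definition yv (ze : R) (c : nat -> R) (n : nat) : nat -> R := fun i => ze * INR n ^ i - c i.

Lemma zb_true d k : zb d k = true -> forall y, dot d k y = 0.
Proof. induction d; intros H y. reflexivity. simpl in H. apply andb_prop in H as [H1 H2].
 unfold dot. rewrite sumN_S. fold (dot d k y). rewrite IHd by auto. apply Z.eqb_eq in H1. rewrite H1. simpl. ring. Qed.

Lemma zb_false d k : zb d k = false -> exists j, (1 <= j <= d)%nat /\ k j <> 0%Z /\ forall i, (j < i <= d)%nat -> k i = 0%Z.
Proof. induction d; intros H. discriminate. simpl in H. destruct (Z.eqb_spec (k (S d)) 0).
 - simpl in H. destruct (IHd H) as [j [Hj [Hk Hi]]]. exists j. split. lia. split; auto.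
   intros i Hi'. destruct (Nat.eq_dec i (S d)). subst; auto. apply Hi; lia.
 - exists (S d). split. lia. split; auto. intros; lia. Qed.

Lemma mono_poly ze c i : PolyD (S i) ze (fun n => ze * INR (S n) ^ (S i) - c (S i)).
Proof. assert (H1 := PolyD_scal _ _ ze _ (PolyD_shift _ _ _ 1 (PolyD_pow (S i)))).
 assert (H2 := PolyD_const i (- c (S i))).
 apply (PolyD_ext _ _ _ _ _ (PolyD_plus _ _ _ _ _ H1 H2)). ring.
 intros n. cbv beta. replace (n + 1)%nat with (S n) by lia. ring. Qed.

Lemma dot_poly d k ze c j : (1 <= j <= d)%nat -> (forall i, (j < i <= d)%nat -> k i = 0%Z) ->
  forall m, (m <= d)%nat -> PolyD j (if Nat.leb j m then IZR (k j) * ze else 0) (fun n => dot m k (yv ze c (S n))).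
Proof. intros Hj Hk m. destruct j as [|j']. lia. induction m; intros Hm.
 - change (PolyD (S j') 0 (fun n => dot 0 k (yv ze c (S n)))). apply (PolyD_ext _ _ _ _ _ (PolyD_const j' 0)); auto.
 - assert (IH := IHm ltac:(lia)).
   assert (Hx : PolyD (S j') (if Nat.eqb (S m) (S j') then IZR (k (S j')) * ze else 0)
                  (fun n => IZR (k (S m)) * (ze * INR (S n) ^ (S m) - c (S m)))).
   { destruct (Nat.eqb_spec (S m) (S j')).
     - rewrite <- e. apply (PolyD_ext _ _ _ _ _ (PolyD_scal _ _ (IZR (k (S m))) _ (mono_poly ze c m))); auto.
     - destruct (Nat.lt_ge_cases (S m) (S j')).
       + apply (PolyD_ext _ _ _ _ _ (PolyD_scal _ _ (IZR (k (S m))) _ (PolyD_lift_le _ _ _ _ H (mono_poly ze c m)))); auto. ring.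
       + rewrite Hk by lia. apply (PolyD_ext _ _ _ _ _ (PolyD_const j' 0)); auto. intros; simpl; ring. }
   apply (PolyD_ext _ _ _ _ _ (PolyD_plus _ _ _ _ _ IH Hx)).
   + destruct (Nat.leb_spec (S j') m); destruct (Nat.eqb_spec (S m) (S j')); destruct (Nat.leb_spec (S j') (S m)); try lia; ring.
   + intros n. unfold dot. rewrite sumN_S. reflexivity. Qed.

Lemma term_WS d k ze c : Irr ze -> zb d k = false -> WS (fun n => dot d k (yv ze c (S n))).
Proof. intros Hi Hz. destruct (zb_false d k Hz) as [j [Hj [Hkj Hk]]].
 assert (HP := dot_poly d k ze c j Hj Hk d (le_n d)).
 replace (Nat.leb j d) with true in HP by (symmetry; apply Nat.leb_le; lia).
 destruct j as [|j']. lia. apply (weyl j' _ _ (Irr_mulZ _ _ Hi Hkj) HP). Qed.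

Lemma avg_TP d ze c T : Irr ze -> forall eps, 0 < eps -> exists N0, forall N, (N0 <= N)%nat ->
  Rabs (sumN N (fun n => evalT d T (yv ze c (S n))) - INR N * LT d T) <= eps * INR N.
Proof. intros Hi. induction T as [|[a k] T IH]; intros eps He.
 - exists O. intros N _. simpl. rewrite sumN_const. rewrite Rmult_0_r, Rminus_diag, Rabs_R0.
   pose proof (pos_INR N). nra.
 - destruct (IH (eps / 2) ltac:(lra)) as [N1 H1].
   assert (Hterm : exists N2, forall N, (N2 <= N)%nat ->
      Rabs (sumN N (fun n => a * cos (2 * PI * dot d k (yv ze c (S n)))) - INR N * (if zb d k then a else 0)) <= eps / 2 * INR N).
   { destruct (zb d k) eqn:Hz.
     - exists O. intros N _. rewrite (sumN_ext N _ (fun _ => a)). rewrite sumN_const.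
       rewrite Rminus_diag, Rabs_R0. pose proof (pos_INR N). nra.
       intros n _. rewrite zb_true by auto. rewrite Rmult_0_r, cos_0. ring.
     - destruct (term_WS d k ze c Hi Hz (eps / 2 / (Rabs a + 1))) as [N2 H2].
       { apply Rdiv_lt_0_compat. lra. pose proof (Rabs_pos a). lra. }
       exists N2. intros N HN. destruct (H2 N HN) as [A1 _].
       rewrite Rmult_0_r, Rminus_0_r. rewrite sumN_scal, Rabs_mult.
       pose proof (Rabs_pos a). pose proof (pos_INR N).
       apply Rle_trans with (Rabs a * (eps / 2 / (Rabs a + 1) * INR N)).
       apply Rmult_le_compat_l; auto.
       replace (Rabs a * (eps / 2 / (Rabs a + 1) * INR N)) with ((Rabs a / (Rabs a + 1)) * (eps / 2 * INR N)) by (field; lra).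
       rewrite <- (Rmult_1_l (eps / 2 * INR N)) at 2. apply Rmult_le_compat_r. nra.
       apply Rmult_le_reg_r with (Rabs a + 1). lra. unfold Rdiv. rewrite Rmult_assoc, Rinv_l; lra. }
   destruct Hterm as [N2 H2]. exists (max N1 N2). intros N HN.
   specialize (H1 N ltac:(lia)). specialize (H2 N ltac:(lia)).
   rewrite (sumN_ext N _ (fun n => a * cos (2 * PI * dot d k (yv ze c (S n))) + evalT d T (yv ze c (S n)))) by reflexivity.
   change (LT d ((a, k) :: T)) with ((if zb d k then a else 0) + LT d T).
   rewrite sumN_plus.
   set (A1 := sumN N (fun n => a * cos (2 * PI * dot d k (yv ze c (S n))))) in *.
   set (B1 := sumN N (fun n => evalT d T (yv ze c (S n)))) in *.
   replace (A1 + B1 - INR N * ((if zb d k then a else 0) + LT d T)) with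
     ((A1 - INR N * (if zb d k then a else 0)) + (B1 - INR N * LT d T)) by ring.
   eapply Rle_trans. apply Rabs_triang. lra. Qed.

Definition kadd (k k' : nat -> Z) : nat -> Z := fun i => (k i + k' i)%Z.
Definition ksub (k k' : nat -> Z) : nat -> Z := fun i => (k i - k' i)%Z.

Definition mulT (T1 T2 : list (R * (nat -> Z))) : list (R * (nat -> Z)) :=
  flat_map (fun t1 => flat_map (fun t2 =>
     (fst t1 * fst t2 / 2, kadd (snd t1) (snd t2)) :: (fst t1 * fst t2 / 2, ksub (snd t1) (snd t2)) :: nil) T2) T1.

Lemma evalT_app d T1 T2 y : evalT d (T1 ++ T2) y = evalT d T1 y + evalT d T2 y.
Proof. induction T1; simpl. ring. unfold evalT in *. simpl. rewrite IHT1. ring. Qed.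

Lemma dot_add d k k' y : dot d (kadd k k') y = dot d k y + dot d k' y.
Proof. unfold dot. rewrite <- sumN_plus. apply sumN_ext; intros. unfold kadd. rewrite plus_IZR. ring. Qed.

Lemma dot_sub d k k' y : dot d (ksub k k') y = dot d k y - dot d k' y.
Proof. unfold dot. rewrite <- sumN_minus. apply sumN_ext; intros. unfold ksub. rewrite minus_IZR. ring. Qed.

Lemma evalT_mul d T1 T2 y : evalT d (mulT T1 T2) y = evalT d T1 y * evalT d T2 y.
Proof. unfold mulT. induction T1 as [|[a k] T1 IH]. simpl. unfold evalT; simpl; ring.
 cbn [flat_map]. rewrite evalT_app. rewrite IH.
 assert (E : evalT d (flat_map (fun t2 => (fst (a, k) * fst t2 / 2, kadd (snd (a, k)) (snd t2))
      :: (fst (a, k) * fst t2 / 2, ksub (snd (a, k)) (snd t2)) :: nil) T2) y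
      = a * cos (2 * PI * dot d k y) * evalT d T2 y).
 { clear IH. induction T2 as [|[b k'] T2 IH2]. unfold evalT; simpl; ring.
   cbn [flat_map]. rewrite evalT_app. rewrite IH2. unfold evalT at 1. simpl fold_right. simpl fst; simpl snd.
   change (evalT d ((b, k') :: T2) y) with (b * cos (2 * PI * dot d k' y) + evalT d T2 y).
   rewrite dot_add, dot_sub.
   replace (2 * PI * (dot d k y + dot d k' y)) with (2 * PI * dot d k y + 2 * PI * dot d k' y) by ring.
   replace (2 * PI * (dot d k y - dot d k' y)) with (2 * PI * dot d k y - 2 * PI * dot d k' y) by ring.
   rewrite cos_plus, cos_minus. field. }
 rewrite E. change (evalT d ((a, k) :: T1) y) with (a * cos (2 * PI * dot d k y) + evalT d T1 y). ring. Qed.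

Definition Rep d (f : (nat -> R) -> R) := exists T, forall y, evalT d T y = f y.

Lemma Rep_mul d f g : Rep d f -> Rep d g -> Rep d (fun y => f y * g y).
Proof. intros [T1 H1] [T2 H2]. exists (mulT T1 T2). intros; rewrite evalT_mul, H1, H2; auto. Qed.

Lemma Rep_const d c : Rep d (fun _ => c).
Proof. exists ((c, fun _ => 0%Z) :: nil). intros y. unfold evalT; simpl.
 unfold dot. rewrite (sumN_ext d _ (fun _ => 0)). rewrite sumN_const. rewrite Rmult_0_r, Rmult_0_r, cos_0. ring.
 intros; simpl; ring. Qed.

Definition ev (i : nat) : nat -> Z := fun j => if Nat.eqb j i then 1%Z else 0%Z.

Lemma dot_ev d i y : (1 <= i <= d)%nat -> dot d (ev i) y = y i.
Proof. intros Hi. unfold dot, ev. destruct i as [|i']. lia.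
 rewrite (sumN_ext d _ (fun m => if Nat.eqb i' m then y (S i') else 0)).
 apply sum_indicator. lia.
 intros m _. destruct (Nat.eqb_spec (S m) (S i')); destruct (Nat.eqb_spec i' m); try lia.
 subst. simpl. ring. simpl. ring. Qed.

Lemma Rep_half d i : (1 <= i <= d)%nat -> Rep d (fun y => (1 + cos (2 * PI * y i)) / 2).
Proof. intros Hi. exists ((1/2, fun _ => 0%Z) :: (1/2, ev i) :: nil). intros y. unfold evalT; simpl.
 rewrite dot_ev by auto.
 unfold dot. rewrite (sumN_ext d (fun i0 => IZR 0 * _) (fun _ => 0)). rewrite sumN_const. rewrite Rmult_0_r, Rmult_0_r, cos_0. field.
 intros; simpl; ring. Qed.

Lemma Rep_half_pow d i M : (1 <= i <= d)%nat -> Rep d (fun y => ((1 + cos (2 * PI * y i)) / 2) ^ M).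
Proof. intros Hi. induction M. apply (Rep_const d 1). simpl. apply Rep_mul. apply Rep_half; lia. auto. Qed.

Fixpoint prodN (n : nat) (f : nat -> R) : R := match n with O => 1 | S n' => prodN n' f * f n' end.

Definition Kf (d M : nat) (y : nat -> R) : R := prodN d (fun m => cos (PI * y (S m)) ^ (2 * M)).

Lemma cos_pow_half x M : cos (PI * x) ^ (2 * M) = ((1 + cos (2 * PI * x)) / 2) ^ M.
Proof. rewrite pow_mult. f_equal. replace (2 * PI * x) with (2 * (PI * x)) by ring.
 rewrite cos_2a_cos. field. Qed.

Lemma Rep_Kf d M : Rep d (Kf d M).
Proof. unfold Kf. assert (forall m, (m <= d)%nat -> Rep d (fun y => prodN m (fun m0 => cos (PI * y (S m0)) ^ (2 * M)))).
 { induction m; intros Hm. apply (Rep_const d 1). simpl prodN. apply Rep_mul. apply IHm; lia.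
   assert (Rep d (fun y => ((1 + cos (2 * PI * y (S m))) / 2) ^ M)) by (apply Rep_half_pow; lia).
   destruct H as [T HT]. exists T. intros y. rewrite HT. rewrite <- cos_pow_half. f_equal. }
 destruct (H d (le_n d)) as [T HT]. exists T. intros; apply HT. Qed.

Lemma cos_lb2 a : - PI / 2 <= a -> a <= PI / 2 -> 1 - a^2/2 <= cos a.
Proof. intros. pose proof (cos_bound a 0 H H0) as [H1 _]. eapply Rle_trans; [|exact H1].
 unfold cos_approx, cos_term. simpl. right. field. Qed.

Lemma cos_int_period x m : cos (x + 2 * IZR m * PI) = cos x.
Proof. destruct (Z.le_gt_cases 0 m).
 - rewrite <- (Z2Nat.id m) by auto. rewrite <- INR_IZR_INZ. apply cos_period.
 - replace x with ((x + 2 * IZR m * PI) + 2 * INR (Z.to_nat (- m)) * PI) at 2.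
   rewrite cos_period; auto. rewrite INR_IZR_INZ, Z2Nat.id by lia. rewrite opp_IZR. ring. Qed.

Lemma cos_sq a : cos a ^ 2 = (1 + cos (2 * a)) / 2.
Proof. rewrite cos_2a_cos. field. Qed.

Lemma cos2_shift x m : cos (PI * (x - IZR m)) ^ 2 = cos (PI * x) ^ 2.
Proof. rewrite !cos_sq. replace (2 * (PI * (x - IZR m))) with (2 * (PI * x) + 2 * IZR (- m) * PI)
  by (rewrite opp_IZR; ring). rewrite cos_int_period. auto. Qed.

Lemma cos2_abs t : cos (PI * t) ^ 2 = cos (PI * Rabs t) ^ 2.
Proof. unfold Rabs. destruct (Rcase_abs t); auto. rewrite <- cos_neg. f_equal. f_equal. ring. Qed.

Lemma PI_pos : 0 < PI. Proof. exact PI_RGT_0. Qed.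

Lemma cos2_far dl x : 0 < dl <= 1/2 -> (forall m : Z, dl <= Rabs (x - IZR m)) -> cos (PI * x) ^ 2 <= cos (PI * dl) ^ 2.
Proof. intros Hd Hm. set (m := Int_part (x + 1/2)). pose proof (base_Int_part (x + 1/2)) as [B1 B2]. fold m in B1, B2.
 rewrite <- (cos2_shift x m). rewrite cos2_abs. specialize (Hm m).
 assert (Rabs (x - IZR m) <= 1/2) by (apply Rabs_le; lra).
 pose proof PI_pos.
 assert (0 <= cos (PI * Rabs (x - IZR m))) by (apply cos_ge_0; pose proof (Rabs_pos (x - IZR m)); nra).
 assert (cos (PI * Rabs (x - IZR m)) <= cos (PI * dl)) by (apply cos_decr_1; nra).
 nra. Qed.

Lemma cos2_near q x : 2 <= q -> (exists m : Z, Rabs (x - IZR m) <= 1 / q) -> cos (PI / q) ^ 2 <= cos (PI * x) ^ 2.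
Proof. intros Hq [m Hm]. rewrite <- (cos2_shift x m). rewrite cos2_abs.
 pose proof PI_pos. pose proof (Rabs_pos (x - IZR m)).
 assert (1 / q <= 1/2) by (apply Rmult_le_reg_r with (2 * q); [lra| field_simplify; lra]).
 assert (0 < PI / q) by (apply Rdiv_lt_0_compat; lra).
 assert (PI / q = PI * (1 / q)) by (field; lra).
 assert (0 <= cos (PI / q)) by (apply cos_ge_0; nra).
 assert (cos (PI / q) <= cos (PI * Rabs (x - IZR m))) by (apply cos_decr_1; nra).
 nra. Qed.

Lemma prodN_01 n f : (forall m, (m < n)%nat -> 0 <= f m <= 1) -> 0 <= prodN n f <= 1.
Proof. induction n; intros H; simpl. lra. assert (0 <= prodN n f <= 1) by (apply IHn; intros; apply H; lia).
 specialize (H n ltac:(lia)). nra. Qed.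

Lemma prodN_small n f j B : (forall m, (m < n)%nat -> 0 <= f m <= 1) -> (j < n)%nat -> f j <= B -> prodN n f <= B.
Proof. induction n; intros H Hj HB. lia. simpl.
 assert (0 <= prodN n f <= 1) by (apply prodN_01; intros; apply H; lia).
 pose proof (H n ltac:(lia)). destruct (Nat.eq_dec j n).
 - subst. nra.
 - assert (prodN n f <= B). { apply IHn; [intros; apply H; lia | lia | auto]. } nra. Qed.

Lemma prodN_lower n f L : 0 <= L -> (forall m, (m < n)%nat -> L <= f m) -> L ^ n <= prodN n f.
Proof. induction n; intros HL H; simpl. lra.
 assert (L ^ n <= prodN n f) by (apply IHn; auto; intros; apply H; lia).
 pose proof (H n ltac:(lia)). pose proof (pow_le L n HL). nra. Qed.

Lemma factor_eq x M : cos (PI * x) ^ (2 * M) = (cos (PI * x) ^ 2) ^ M.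
Proof. apply pow_mult. Qed.

Lemma cos2_01 x : 0 <= cos x ^ 2 <= 1.
Proof. pose proof (COS_bound x). split. apply pow2_ge_0. nra. Qed.

Definition sumL {X} (G : list X) (f : X -> R) : R := fold_right (fun g acc => f g + acc) 0 G.

Lemma sumL_nonneg {X} (G : list X) f : (forall g, In g G -> 0 <= f g) -> 0 <= sumL G f.
Proof. induction G; simpl; intros Hf. lra. pose proof (Hf a (or_introl eq_refl)).
 assert (0 <= sumL G f) by (apply IHG; auto). lra. Qed.

Lemma sumL_ge {X} (G : list X) f g0 : In g0 G -> (forall g, In g G -> 0 <= f g) -> f g0 <= sumL G f.
Proof. induction G; simpl; intros Hin Hf. contradiction. destruct Hin.
 - subst. assert (0 <= sumL G f) by (apply sumL_nonneg; intros; apply Hf; simpl; auto). lra.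
 - pose proof (Hf a (or_introl eq_refl)). assert (f g0 <= sumL G f) by (apply IHG; auto). lra. Qed.

Lemma sumL_le {X} (G : list X) f K : (forall g, In g G -> f g <= K) -> sumL G f <= INR (length G) * K.
Proof. induction G; simpl length; simpl sumL; intros H. simpl; lra. rewrite S_INR. pose proof (H a (or_introl eq_refl)).
 assert (sumL G f <= INR (length G) * K) by (apply IHG; intros; apply H; simpl; auto). lra. Qed.

Lemma sumL_sumN {X} (G : list X) N (f : X -> nat -> R) :
  sumN N (fun n => sumL G (fun g => f g n)) = sumL G (fun g => sumN N (f g)).
Proof. induction G; simpl. rewrite sumN_const; ring. rewrite sumN_plus. rewrite IHG. auto. Qed.

Lemma list_uniform {X} (G : list X) (Pr : X -> nat -> Prop) :
  (forall g, In g G -> exists N0, forall N, (N0 <= N)%nat -> Pr g N) ->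
  exists N0, forall g, In g G -> forall N, (N0 <= N)%nat -> Pr g N.
Proof. induction G; intros H. exists O. intros g Hg. contradiction.
 destruct IHG as [N1 H1]. intros; apply H; simpl; auto.
 destruct (H a (or_introl eq_refl)) as [N2 H2]. exists (max N1 N2). intros g Hg N HN.
 destruct Hg. subst; apply H2; lia. apply H1; auto; lia. Qed.

Fixpoint grid (Q e : nat) : list (nat -> R) :=
  match e with
  | O => (fun _ => 0) :: nil
  | S e' => flat_map (fun g => map (fun j => fun i => if Nat.eqb i (S e') then INR j / INR Q else g i) (seq 0 Q)) (grid Q e')
  end.

Lemma grid_length Q e : length (grid Q e) = (Q ^ e)%nat.
Proof. induction e; simpl. auto. rewrite flat_map_concat_map, length_concat, map_map.
 rewrite (map_ext _ (fun _ => Q)) by (intros; rewrite length_map, length_seq; auto).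
 rewrite <- IHe. generalize (grid Q e). induction l; simpl; lia. Qed.

Lemma coord_approx (q : nat) x : (1 <= q)%nat -> exists j, (j < q)%nat /\ exists m : Z, Rabs (x - INR j / INR q - IZR m) <= 1 / INR q.
Proof. intros Hq. assert (HQ : 1 <= INR q) by (replace 1 with (INR 1) by reflexivity; apply le_INR; auto).
 set (m := Int_part x). pose proof (base_Int_part x) as [B1 B2]. fold m in B1, B2.
 set (t := x - IZR m). assert (Ht : 0 <= t < 1) by (unfold t; lra).
 set (p := Int_part (t * INR q)). pose proof (base_Int_part (t * INR q)) as [C1 C2]. fold p in C1, C2.
 assert (Hp0 : (0 <= p)%Z). { assert (IZR (-1) < IZR p) by (simpl; nra). apply lt_IZR in H. lia. }
 assert (Hpq : (p < Z.of_nat q)%Z). { apply lt_IZR. rewrite <- INR_IZR_INZ. nra. }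
 exists (Z.to_nat p). split. lia. exists m. rewrite INR_IZR_INZ, Z2Nat.id by auto.
 apply Rabs_le. split.
 - apply Rmult_le_reg_r with (INR q). lra. unfold Rdiv. field_simplify; try lra.
   assert (E: INR q * x - INR q * IZR m = t * INR q) by (unfold t; ring). lra.
 - apply Rmult_le_reg_r with (INR q). lra. unfold Rdiv. field_simplify; try lra.
   assert (E: INR q * x - INR q * IZR m = t * INR q) by (unfold t; ring). lra. Qed.

Lemma grid_cover (Q : nat) e y : (1 <= Q)%nat -> exists g, In g (grid Q e) /\
  forall i, (1 <= i <= e)%nat -> exists m : Z, Rabs (y i - g i - IZR m) <= 1 / INR Q.
Proof. intros HQ. induction e.
 - exists (fun _ => 0). split. simpl; auto. intros; lia.
 - destruct IHe as [g [Hg Hc]]. destruct (coord_approx Q (y (S e)) HQ) as [j [Hj Hm]].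
   exists (fun i => if Nat.eqb i (S e) then INR j / INR Q else g i). split.
   + simpl. apply in_flat_map. exists g. split; auto. apply in_map_iff. exists j. split; auto. apply in_seq. lia.
   + intros i Hi. destruct (Nat.eqb_spec i (S e)). subst; auto. apply Hc. lia. Qed.

Lemma div_nonneg a b : 0 <= a -> 0 < b -> 0 <= a / b.
Proof. intros. unfold Rdiv. apply Rmult_le_pos; auto. left; apply Rinv_0_lt_compat; auto. Qed.

Lemma bernoulli n x : 0 <= x <= 1 -> 1 - INR n * x <= (1 - x) ^ n.
Proof. intros Hx. induction n. simpl; lra. rewrite S_INR. simpl.
 pose proof (pos_INR n). nra. Qed.

Lemma pow_le_1 a M : 0 <= a <= 1 -> 0 <= a ^ M <= 1.
Proof. intros H. split. apply pow_le; lra. rewrite <- (pow1 M). apply pow_incr. lra. Qed.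

Lemma choose_Q d c1 : (1 <= d)%nat -> 0 <= c1 < 1 -> exists q : nat, (2 <= q)%nat /\ c1 < (cos (PI / INR q) ^ 2) ^ d.
Proof. intros Hd Hc. destruct (INR_archimed (1 - c1) (INR d * PI ^ 2) ltac:(lra)) as [n Hn].
 exists (n + 4)%nat. split. lia. set (q := INR (n + 4)).
 assert (Hq : 4 <= q) by (unfold q; rewrite plus_INR; simpl; pose proof (pos_INR n); lra).
 assert (Hnq : INR n <= q) by (unfold q; rewrite plus_INR; simpl; lra).
 pose proof PI_pos. pose proof PI_4.
 set (a := PI / q). assert (Ha : 0 < a <= 1). { unfold a. split. apply Rdiv_lt_0_compat; lra.
   apply Rmult_le_reg_r with q. lra. unfold Rdiv. rewrite Rmult_assoc, Rinv_l; lra. }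
 pose proof PI2_1 as Hpi2. assert (Hcos : 1 - a ^ 2 / 2 <= cos a) by (apply cos_lb2; lra).
 assert (H0a : 0 <= 1 - a ^ 2 / 2) by nra.
 assert (H1 : 1 - a ^ 2 <= cos a ^ 2). { assert ((1 - a^2/2)^2 <= cos a ^ 2) by (apply pow_incr; lra). nra. }
 assert (H2 : 1 - INR d * a ^ 2 <= (cos a ^ 2) ^ d).
 { eapply Rle_trans. apply bernoulli. split; nra. apply pow_incr. nra. }
 assert (H3 : INR d * a ^ 2 < 1 - c1).
 { unfold a. replace (INR d * (PI / q) ^ 2) with (INR d * PI ^ 2 / (q * q)) by (field; lra).
   apply Rmult_lt_reg_r with (q * q). nra. unfold Rdiv. rewrite Rmult_assoc, Rinv_l by nra.
   assert (INR d * PI ^ 2 < (1 - c1) * q).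
   { assert (0 <= (q - INR n) * (1 - c1)) by (apply Rmult_le_pos; lra). nra. }
   assert (0 <= (1 - c1) * q * (q - 1)) by (apply Rmult_le_pos; [apply Rmult_le_pos|]; lra).
   nra. }
 lra. Qed.

Theorem density d ze : (1 <= d)%nat -> Irr ze -> forall (c : nat -> R) eps, 0 < eps ->
  exists n, (1 <= n)%nat /\ forall i, (1 <= i <= d)%nat -> exists m : Z, Rabs (ze * INR n ^ i - IZR m - c i) < eps.
Proof. intros Hd Hi c eps He. apply NNPP; intro Hno.
 assert (Hbad : forall n, (1 <= n)%nat -> exists i, (1 <= i <= d)%nat /\ forall m : Z, eps <= Rabs (ze * INR n ^ i - IZR m - c i)).
 { intros n Hn. apply NNPP; intro Hb. apply Hno. exists n. split; auto. intros i Hii.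
   apply NNPP; intro Hm. apply Hb. exists i. split; auto. intros m. apply Rnot_lt_le. intro. apply Hm. exists m; auto. }
 clear Hno.
 set (dl := Rmin eps (1/2)).
 assert (Hdl : 0 < dl <= 1/2) by (unfold dl; split; [apply Rmin_glb_lt; lra| apply Rmin_r]).
 assert (Hdle : dl <= eps) by apply Rmin_l.
 set (c1 := cos (PI * dl) ^ 2).
 pose proof PI_pos.
 assert (Hc1 : 0 <= c1 < 1).
 { unfold c1. assert (0 <= cos (PI * dl)) by (apply cos_ge_0; nra).
   assert (cos (PI * dl) < 1) by (rewrite <- cos_0; apply cos_decreasing_1; nra). nra. }
 destruct (choose_Q d c1 Hd Hc1) as [q [Hq Hc2]].
 set (c2 := (cos (PI / INR q) ^ 2) ^ d) in *.
 assert (Hc2p : 0 < c2) by lra.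
 assert (HqR : 2 <= INR q) by (replace 2 with (INR 2) by reflexivity; apply le_INR; auto).
 set (G := grid q d).
 assert (HG : INR (length G) = INR q ^ d) by (unfold G; rewrite grid_length, pow_INR; auto).
 assert (HGp : 0 < INR q ^ d) by (apply pow_lt; lra).
 destruct (pow_lt_1_zero (c1 / c2) ltac:(rewrite Rabs_right; [apply Rmult_lt_reg_r with c2; [lra| unfold Rdiv; rewrite Rmult_assoc, Rinv_l; lra]| apply Rle_ge, div_nonneg; lra])
    (1 / INR q ^ d) ltac:(apply Rdiv_lt_0_compat; lra)) as [M HM].
 specialize (HM M (le_n M)). rewrite Rabs_right in HM by (apply Rle_ge, pow_le, div_nonneg; lra).
 destruct (Rep_Kf d M) as [T HT]. set (L := LT d T).
 assert (Hfac01 : forall y m, 0 <= cos (PI * y (S m)) ^ (2 * M) <= 1).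
 { intros y m. rewrite factor_eq. apply pow_le_1. apply cos2_01. }
 assert (HU : L <= c1 ^ M).
 { apply Rle_plus_epsilon. intros e He'.
   destruct (avg_TP d ze c T Hi e He') as [N0 HN0]. set (N := max N0 1).
   specialize (HN0 N ltac:(unfold N; lia)).
   assert (HN1 : 1 <= INR N) by (replace 1 with (INR 1) by reflexivity; apply le_INR; unfold N; lia).
   assert (Hs : sumN N (fun n => evalT d T (yv ze c (S n))) <= INR N * c1 ^ M).
   { rewrite <- sumN_const. apply sumN_le. intros n _. rewrite HT. unfold Kf.
     destruct (Hbad (S n) ltac:(lia)) as [i [Hii Hm]].
     apply (prodN_small d _ (i - 1)). intros; apply Hfac01. lia.
     replace (S (i - 1)) with i by lia. rewrite factor_eq. apply pow_incr. split. apply cos2_01.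
     apply cos2_far; auto. intros m. unfold yv. specialize (Hm m).
     replace (ze * INR (S n) ^ i - c i - IZR m) with (ze * INR (S n) ^ i - IZR m - c i) by ring. lra. }
   apply Rabs_le_between in HN0.
   fold L in HN0. apply Rmult_le_reg_l with (INR N). lra. lra. }
 assert (HLo : c2 ^ M <= INR q ^ d * L).
 { rewrite <- HG. apply Rle_plus_epsilon. intros e He'.
   set (e' := e / INR (length G)).
   assert (He2 : 0 < e') by (unfold e'; apply Rdiv_lt_0_compat; lra).
   destruct (list_uniform G (fun g N => Rabs (sumN N (fun n => evalT d T (yv ze g (S n))) - INR N * L) <= e' * INR N))
     as [N0 HN0]. { intros g _. apply avg_TP; auto. }
   set (N := max N0 1).
   assert (HN1 : 1 <= INR N) by (replace 1 with (INR 1) by reflexivity; apply le_INR; unfold N; lia).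
   assert (Hpt : forall n, c2 ^ M <= sumL G (fun g => evalT d T (yv ze g (S n)))).
   { intros n. destruct (grid_cover q d (fun i => ze * INR (S n) ^ i) ltac:(lia)) as [g0 [Hg0 Hc0]].
     eapply Rle_trans; [|apply (sumL_ge G _ g0 Hg0)].
     - cbv beta. rewrite HT. unfold Kf. unfold c2. rewrite <- pow_mult, Nat.mul_comm, pow_mult.
       apply prodN_lower. apply pow_le, pow2_ge_0.
       intros m Hm. rewrite factor_eq. apply pow_incr. split. apply pow2_ge_0.
       apply cos2_near; auto. destruct (Hc0 (S m) ltac:(lia)) as [z Hz]. exists z. unfold yv. auto.
     - intros g _. rewrite HT. unfold Kf. apply prodN_01. intros; apply Hfac01. }
   assert (Hsum : INR N * c2 ^ M <= sumL G (fun g => sumN N (fun n => evalT d T (yv ze g (S n))))).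
   { rewrite <- sumL_sumN. rewrite <- sumN_const. apply sumN_le. intros; apply Hpt. }
   assert (Hup : sumL G (fun g => sumN N (fun n => evalT d T (yv ze g (S n)))) <= INR (length G) * (INR N * (L + e'))).
   { apply sumL_le. intros g Hg. specialize (HN0 g Hg N ltac:(unfold N; lia)). apply Rabs_le_between in HN0. nra. }
   assert (c2 ^ M <= INR (length G) * (L + e')).
   { apply Rmult_le_reg_l with (INR N). lra. nra. }
   unfold e' in H0. replace (INR (length G) * (L + e / INR (length G))) with (INR (length G) * L + e) in H0 by (field; lra).
   lra. }
 assert (Hcm : c1 ^ M = (c1 / c2) ^ M * c2 ^ M) by (rewrite <- Rpow_mult_distr; f_equal; field; lra).
 assert (0 < c2 ^ M) by (apply pow_lt; lra).
 assert (INR q ^ d * (c1 / c2) ^ M < 1).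
 { apply Rmult_lt_reg_r with (/ INR q ^ d). apply Rinv_0_lt_compat; lra.
   replace (INR q ^ d * (c1 / c2) ^ M * / INR q ^ d) with ((c1 / c2) ^ M) by (field; lra). lra. }
 assert (INR q ^ d * L <= INR q ^ d * c1 ^ M) by (apply Rmult_le_compat_l; lra).
 rewrite Hcm in H2. nra. Qed.

Lemma ln_le' x y : 0 < x -> x <= y -> ln x <= ln y.
Proof. intros H1 H2. destruct H2. left; apply ln_increasing; auto. subst; lra. Qed.

Lemma exp_le' x y : x <= y -> exp x <= exp y.
Proof. intros H. destruct H. left; apply exp_increasing; auto. subst; lra. Qed.

Lemma frac_spec x (m : Z) : IZR m <= x < IZR m + 1 -> frac x = x - IZR m.
Proof. intros H. unfold frac. destruct (Int_part_frac_part_spec x m (x - IZR m)) as [_ E]. lra. ring. auto. Qed.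

Lemma frac_bounds x : 0 <= frac x < 1.
Proof. unfold frac. pose proof (base_fp x). lra. Qed.

Lemma frac_int x : IZR (Int_part x) <= x < IZR (Int_part x) + 1.
Proof. pose proof (base_Int_part x). lra. Qed.

Lemma frac_def x : frac x = x - IZR (Int_part x).
Proof. apply frac_spec, frac_int. Qed.

Lemma frac_shift x (z : Z) : frac (x + IZR z) = frac x.
Proof. rewrite (frac_spec (x + IZR z) (Int_part x + z)). rewrite frac_def, plus_IZR. ring.
 rewrite plus_IZR. pose proof (frac_int x). lra. Qed.

Lemma frac_small x s : 0 <= s -> frac x + s < 1 -> frac (x + s) = frac x + s.
Proof. intros H1 H2. rewrite (frac_spec (x + s) (Int_part x)). rewrite frac_def. ring.
 rewrite frac_def in H2. pose proof (frac_int x). lra. Qed.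

Lemma lnb_pos b : (2 <= b)%nat -> 0 < ln (INR b).
Proof. intros Hb. rewrite <- ln_1. apply ln_increasing. lra.
 replace 1 with (INR 1) by reflexivity. apply lt_INR. lia. Qed.

Lemma msd_iff b a N t : (2 <= b)%nat -> 0 < a -> (1 <= t <= b - 1)%nat ->
  (is_msd b (a ^ N) t <-> logb b (INR t) <= frac (logb b a * INR N) < logb b (INR (t + 1))).
Proof. intros Hb Ha Ht. pose proof (lnb_pos b Hb) as Hl.
 assert (HbR : 0 < INR b) by (apply lt_0_INR; lia).
 assert (HtR : 1 <= INR t) by (replace 1 with (INR 1) by reflexivity; apply le_INR; lia).
 assert (Ht1R : INR (t + 1) <= INR b) by (apply le_INR; lia).
 assert (Hlt : 0 <= ln (INR t)) by (rewrite <- ln_1; apply ln_le'; lra).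
 assert (Hlt1 : ln (INR (t + 1)) <= ln (INR b)) by (apply ln_le'; [apply lt_0_INR; lia| auto]).
 assert (HaN : a ^ N = exp (INR N * ln a)) by (rewrite <- ln_pow, exp_ln; auto; apply pow_lt; auto).
 assert (Hz : logb b a * INR N = INR N * ln a / ln (INR b)) by (unfold logb; field; lra).
 assert (Hpw : forall m : Z, powerRZ (INR b) m = exp (IZR m * ln (INR b))) by (intros; rewrite powerRZ_Rpower; auto).
 assert (Hlog : forall x, 0 < x -> logb b x * ln (INR b) = ln x) by (intros; unfold logb; field; lra).
 assert (HtR' : 0 < INR t) by lra. assert (Ht1' : 0 < INR (t + 1)) by (apply lt_0_INR; lia).
 split.
 - intros [_ [m [H1 H2]]]. rewrite Rabs_right in H1, H2 by (left; apply pow_lt; auto).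
   rewrite HaN, Hpw in H1, H2. rewrite <- (exp_ln (INR t)), <- exp_plus in H1 by auto.
   rewrite <- (exp_ln (INR (t+1))), <- exp_plus in H2 by auto.
   assert (E1 : IZR m * ln (INR b) + ln (INR t) <= INR N * ln a).
   { destruct H1 as [H1|H1]. left; apply exp_lt_inv; auto. assert (ln (exp (IZR m * ln (INR b) + ln (INR t))) = ln (exp (INR N * ln a))) by (rewrite H1; auto). rewrite !ln_exp in H. lra. }
   apply exp_lt_inv in H2.
   assert (F1 : IZR m + logb b (INR t) <= logb b a * INR N).
   { rewrite Hz. apply Rmult_le_reg_r with (ln (INR b)); auto. rewrite Rmult_plus_distr_r, Hlog by auto.
     field_simplify; lra. }
   assert (F2 : logb b a * INR N < IZR m + logb b (INR (t + 1))).
   { rewrite Hz. apply Rmult_lt_reg_r with (ln (INR b)); auto. rewrite Rmult_plus_distr_r, Hlog by auto.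
     field_simplify; lra. }
   assert (G1 : 0 <= logb b (INR t)) by (unfold logb; apply Rmult_le_pos; [lra| left; apply Rinv_0_lt_compat; lra]).
   assert (G2 : logb b (INR (t + 1)) <= 1).
   { unfold logb. apply Rmult_le_reg_r with (ln (INR b)); auto. field_simplify; lra. }
   rewrite (frac_spec _ m) by lra. lra.
 - intros [H1 H2]. split. lia. set (z := logb b a * INR N) in *.
   exists (Int_part z). pose proof (frac_def z) as Fz.
   rewrite Rabs_right by (left; apply pow_lt; auto). rewrite HaN, Hpw.
   rewrite <- (exp_ln (INR t)) at 1 by auto. rewrite <- (exp_ln (INR (t+1))) by auto. rewrite <- !exp_plus.
   assert (E : INR N * ln a = z * ln (INR b)) by (rewrite Hz; field; lra).
   rewrite E. split.
   + apply exp_le'. rewrite <- (Hlog (INR t)) by auto.  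
     nra.
   + apply exp_increasing. rewrite <- (Hlog (INR (t+1))) by auto. nra. Qed.

Lemma C_n0 n : C n 0 = 1.
Proof. unfold C. replace (n - 0)%nat with n by lia. simpl. field. apply INR_fact_neq_0. Qed.

Lemma C_nn n : C n n = 1.
Proof. unfold C. replace (n - n)%nat with 0%nat by lia. simpl. field. apply INR_fact_neq_0. Qed.

Lemma C_nat n : forall k, (k <= n)%nat -> exists m : nat, C n k = INR m.
Proof. induction n; intros k Hk.
 - replace k with 0%nat by lia. exists 1%nat. rewrite C_n0. reflexivity.
 - destruct k as [|k]. exists 1%nat. rewrite C_n0. reflexivity.
   destruct (Nat.eq_dec k n). subst. exists 1%nat. rewrite C_nn. reflexivity.
   rewrite <- pascal by lia. destruct (IHn k ltac:(lia)) as [m1 H1]. destruct (IHn (S k) ltac:(lia)) as [m2 H2].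
   exists (m1 + m2)%nat. rewrite plus_INR, H1, H2. auto. Qed.

Lemma C_nonneg n k : (k <= n)%nat -> 0 <= C n k.
Proof. intros H. destruct (C_nat n k H) as [m Hm]. rewrite Hm. apply pos_INR. Qed.

Definition lift (ze : R) (y : nat -> R) : nat -> R := fun i => ze + sum_f 1 i (fun j => C i j * y j).

Lemma sum_f_1 i g : (1 <= i)%nat -> sum_f 1 i g = sum_f_R0 (fun x => g (S x)) (i - 1).
Proof. intros. unfold sum_f. apply sum_eq. intros. f_equal. lia. Qed.

Lemma sum_int_diff N u v : (forall x, (x <= N)%nat -> exists z : Z, u x - v x = IZR z) ->
  exists z : Z, sum_f_R0 u N - sum_f_R0 v N = IZR z.
Proof. induction N; intros H; simpl. apply H; lia.
 destruct IHN as [z1 H1]. intros; apply H; lia. destruct (H (S N) (le_n _)) as [z2 H2].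
 exists (z1 + z2)%Z. rewrite plus_IZR. lra. Qed.

Lemma fmap_proj d ze y : fmap d ze (proj_torus d y) = proj_torus d (lift ze y).
Proof. apply functional_extensionality. intros i. unfold fmap, proj_torus, lift.
 destruct (in_range d i) eqn:Hr; auto.
 unfold in_range in Hr. apply andb_prop in Hr as [H1 H2]. apply Nat.leb_le in H1, H2.
 rewrite !sum_f_1 by auto.
 destruct (sum_int_diff (i - 1) (fun x => C i (S x) * y (S x))
    (fun x => C i (S x) * (if in_range d (S x) then frac (y (S x)) else 0))) as [z Hz].
 { intros x Hx. assert (in_range d (S x) = true) by (unfold in_range; apply andb_true_intro; split; apply Nat.leb_le; lia).
   rewrite H. destruct (C_nat i (S x) ltac:(lia)) as [m Hm]. rewrite Hm, frac_def.
   exists (Z.of_nat m * Int_part (y (S x)))%Z. rewrite mult_IZR, <- INR_IZR_INZ. ring. }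
 replace (ze + sum_f_R0 (fun x => C i (S x) * y (S x)) (i - 1)) with
   (ze + sum_f_R0 (fun x => C i (S x) * (if in_range d (S x) then frac (y (S x)) else 0)) (i - 1) + IZR z) by lra.
 rewrite frac_shift. auto. Qed.

Lemma iter_proj d ze y j : Nat.iter j (fmap d ze) (proj_torus d y) = proj_torus d (Nat.iter j (lift ze) y).
Proof. induction j; simpl. auto. rewrite IHj. apply fmap_proj. Qed.

Lemma lift_mono ze x y : (forall k, (1 <= k)%nat -> y k = ze * x ^ k) ->
  forall i, (1 <= i)%nat -> lift ze y i = ze * (x + 1) ^ i.
Proof. intros Hy i Hi. unfold lift. rewrite binomial. rewrite decomp_sum by lia.
 rewrite sum_f_1 by auto. replace (Init.Nat.pred i) with (i - 1)%nat by lia.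
 rewrite C_n0. simpl pow at 1. rewrite pow1. rewrite Rmult_plus_distr_l.
 rewrite scal_sum.
 rewrite (sum_eq _ (fun x0 => C i (S x0) * x ^ S x0 * 1 ^ (i - S x0) * ze)). ring.
 intros. rewrite Hy, pow1 by lia. ring. Qed.

Lemma orbit ze n j : forall i, (1 <= i)%nat -> Nat.iter j (lift ze) (fun k => ze * INR n ^ k) i = ze * INR (n + j) ^ i.
Proof. induction j; intros i Hi. simpl. f_equal. f_equal. f_equal. lia.
 simpl Nat.iter. rewrite (lift_mono ze (INR (n + j))); auto. rewrite <- S_INR. f_equal. f_equal. f_equal. lia. Qed.

Lemma sum_diff_bound N u v w s : (forall x, (x <= N)%nat -> 0 <= u x - v x <= s * w x) ->
  0 <= sum_f_R0 u N - sum_f_R0 v N <= s * sum_f_R0 w N.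
Proof. induction N; intros Hb; simpl. apply Hb; lia.
 assert (0 <= sum_f_R0 u N - sum_f_R0 v N <= s * sum_f_R0 w N) by (apply IHN; intros; apply Hb; lia).
 pose proof (Hb (S N) (le_n _)). lra. Qed.

Lemma sumC_le i : (1 <= i)%nat -> sum_f_R0 (fun x => C i (S x)) (i - 1) <= 2 ^ i.
Proof. intros Hi. replace 2 with (1 + 1) by ring. rewrite binomial. rewrite (decomp_sum _ i) by lia.
 replace (Init.Nat.pred i) with (i - 1)%nat by lia. rewrite C_n0.
 rewrite (sum_eq (fun i0 => C i (S i0) * 1 ^ S i0 * 1 ^ (i - S i0)) (fun x => C i (S x))). rewrite !pow1. lra. intros. rewrite !pow1. ring. Qed.

Lemma lift_growth ze Y Z s d : 0 <= s -> (forall k, (1 <= k <= d)%nat -> 0 <= Y k - Z k <= s) ->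
  forall i, (1 <= i <= d)%nat -> 0 <= lift ze Y i - lift ze Z i <= 2 ^ d * s.
Proof. intros Hs H i Hi. unfold lift. rewrite !sum_f_1 by lia.
 assert (Hb := sum_diff_bound (i - 1) (fun x => C i (S x) * Y (S x)) (fun x => C i (S x) * Z (S x)) (fun x => C i (S x)) s).
 destruct Hb as [B1 B2].
 { intros x Hx. pose proof (C_nonneg i (S x) ltac:(lia)). pose proof (H (S x) ltac:(lia)). nra. }
 pose proof (sumC_le i ltac:(lia)). assert (2 ^ i <= 2 ^ d) by (apply Rle_pow; lra || lia).
 split. lra. nra. Qed.

Lemma iter_growth ze Y Z s d : 0 <= s -> (forall k, (1 <= k <= d)%nat -> 0 <= Y k - Z k <= s) ->
  forall j i, (1 <= i <= d)%nat -> 0 <= Nat.iter j (lift ze) Y i - Nat.iter j (lift ze) Z i <= (2 ^ d) ^ j * s.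
Proof. intros Hs H j. induction j; intros i Hi. simpl. rewrite Rmult_1_l. auto.
 simpl Nat.iter.
 assert (0 <= (2 ^ d) ^ j * s) by (apply Rmult_le_pos; auto; apply pow_le; apply pow_le; lra).
 pose proof (lift_growth ze _ _ _ d H0 IHj i Hi). replace ((2 ^ d) ^ S j * s) with (2 ^ d * ((2 ^ d) ^ j * s)) by (simpl; ring). auto. Qed.

Lemma finite_min L (f : nat -> R) : (forall i, (i < L)%nat -> 0 < f i) -> exists mg, 0 < mg /\ forall i, (i < L)%nat -> mg <= f i.
Proof. induction L; intros H. exists 1. split. lra. intros; lia.
 destruct IHL as [m1 [H1 H2]]. intros; apply H; lia.
 exists (Rmin m1 (f L)). split. apply Rmin_glb_lt; [auto| apply H; lia].
 intros i Hi. destruct (Nat.eq_dec i L). subst. apply Rmin_r. eapply Rle_trans. apply Rmin_l. apply H2; lia. Qed.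

Lemma logb_le1 b t : (2 <= b)%nat -> (1 <= t <= b - 1)%nat -> logb b (INR (t + 1)) <= 1.
Proof. intros Hb Ht. pose proof (lnb_pos b Hb). unfold logb.
 apply Rmult_le_reg_r with (ln (INR b)); auto. field_simplify; try lra.
 apply ln_le'. apply lt_0_INR; lia. apply le_INR; lia. Qed.

Theorem mainTheorem3 (d b : nat) (a : R)
  (hd : (1 <= d)%nat) (hb : (5 <= b)%nat) (ha : 0 < a)
  (hirr : ~ exists (p q : Z), q <> 0%Z /\ logb b a = IZR p / IZR q)
  (u : list nat) (hu : forall t, In t u -> (1 <= t <= b - 1)%nat) :
  is_factor b d a u <-> nonempty_interior d (U_word b d (logb b a) u).
Proof.
 set (ze := logb b a).
 assert (Hi : Irr ze) by exact hirr.
 assert (Hb2 : (2 <= b)%nat) by lia.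
 assert (Hrd : in_range d d = true) by (unfold in_range; apply andb_true_intro; split; apply Nat.leb_le; lia).
 assert (Hproj_d : forall y, proj_torus d y d = frac (y d)) by (intros; unfold proj_torus; rewrite Hrd; auto).
 assert (Htor : forall y, in_torus d (proj_torus d y)).
 { intros y i Hi'. unfold proj_torus. replace (in_range d i) with true. apply frac_bounds.
   symmetry. unfold in_range; apply andb_true_intro; split; apply Nat.leb_le; lia. }
 assert (Hnth : forall i, (i < length u)%nat -> (1 <= nth i u 0%nat <= b - 1)%nat) by (intros; apply hu; apply nth_In; auto).
 split.
 - intros [k [Hk Hw]].
   set (L := length u).
   set (fr := fun i => frac (ze * INR (k + i) ^ d)).
   assert (Hfr : forall i, (i < L)%nat -> logb b (INR (nth i u 0%nat)) <= fr i < logb b (INR (nth i u 0%nat + 1))).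
   { intros i Hil. specialize (Hw i Hil). unfold word_w in Hw. apply msd_iff in Hw; auto.
     unfold fr. rewrite pow_INR in Hw. auto. }
   destruct (finite_min L (fun i => logb b (INR (nth i u 0%nat + 1)) - fr i)) as [mg [Hmg Hmg2]].
   { intros i Hil. pose proof (Hfr i Hil). lra. }
   set (K := 2 ^ d).
   assert (HK : 1 <= K) by (unfold K; apply pow_R1_Rle; lra).
   assert (HKL : 0 < K ^ L) by (apply pow_lt; lra).
   set (eps := mg / (4 * K ^ L)).
   assert (Heps : 0 < eps) by (unfold eps; apply Rdiv_lt_0_compat; lra).
   exists (fun i => ze * INR k ^ i + eps), eps. split; auto.
   intros y Hy. split; auto. intros j Hj.
   rewrite iter_proj. split; auto. rewrite Hproj_d.
   assert (Hg := iter_growth ze y (fun i => ze * INR k ^ i) (2 * eps) d ltac:(lra)).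
   destruct (Hg ltac:(intros i Hii; specialize (Hy i Hii); apply Rabs_lt_between in Hy; lra) j d ltac:(lia)) as [G1 G2].
   rewrite orbit in G1, G2 by lia.
   set (Zd := ze * INR (k + j) ^ d) in *.
   set (dl := Nat.iter j (lift ze) y d - Zd) in *.
   assert (HKj : K ^ j <= K ^ L) by (apply Rle_pow; auto; lia).
   assert (Hdl : dl <= mg / 2).
   { eapply Rle_trans. exact G2. fold K.
     apply Rle_trans with (K ^ L * (2 * eps)). apply Rmult_le_compat_r; [lra|auto].
     unfold eps. right. field. lra. }
   replace (Nat.iter j (lift ze) y d) with (Zd + dl) by (unfold dl; ring).
   pose proof (Hfr j Hj). pose proof (Hmg2 j Hj). pose proof (logb_le1 b _ Hb2 (Hnth j Hj)).
   unfold fr in *.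
   unfold Zd. rewrite frac_small by lra. lra.
 - intros [c [eps [Heps HS]]].
   destruct (density d ze hd Hi c eps Heps) as [n [Hn Hm]].
   assert (Hm' : forall i, exists m : Z, (1 <= i <= d)%nat -> Rabs (ze * INR n ^ i - IZR m - c i) < eps).
   { intros i. destruct (le_lt_dec 1 i); [destruct (le_lt_dec i d)|].
     - destruct (Hm i ltac:(lia)) as [m Hmm]. exists m; auto.
     - exists 0%Z; intros; lia.
     - exists 0%Z; intros; lia. }
   set (mf := fun i => proj1_sig (constructive_indefinite_description _ (Hm' i))).
   assert (Hmf : forall i, (1 <= i <= d)%nat -> Rabs (ze * INR n ^ i - IZR (mf i) - c i) < eps).
   { intros i Hii. unfold mf. destruct (constructive_indefinite_description _ (Hm' i)) as [m Hmm]. simpl. auto. }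
   set (y := fun i => ze * INR n ^ i - IZR (mf i)).
   assert (Hyc := HS y ltac:(intros i Hii; unfold y; auto)).
   assert (Ep : proj_torus d y = proj_torus d (fun i => ze * INR n ^ i)).
   { apply functional_extensionality. intros i. unfold proj_torus, y. destruct (in_range d i); auto.
     replace (ze * INR n ^ i - IZR (mf i)) with (ze * INR n ^ i + IZR (- mf i)) by (rewrite opp_IZR; ring).
     apply frac_shift. }
   rewrite Ep in Hyc. destruct Hyc as [_ Hyc].
   exists n. split; auto. intros j Hj. specialize (Hyc j Hj).
   rewrite iter_proj in Hyc. destruct Hyc as [_ Hyc]. rewrite Hproj_d in Hyc.
   rewrite orbit in Hyc by lia.
   unfold word_w. apply msd_iff; auto. rewrite pow_INR. auto.
Qed.
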